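(* Let $G$ be a finite simple connected graph with $m\ge 1$ edges such that $\sum_{e_{uv}\in E}(d_u+d_v)=4m$. Then $G$ is either a cycle (of any order) or a tree having a unique vertex of largest degree, this largest degree being $\Delta=3$. In the latter case the tree has order $n\geq 4$.
   Context: $d_u$ denotes the degree of vertex $u$; the sum is over all edges $e_{uv}$ of $G$, each counted once. *)

(* Defs.v *)
From mathcomp Require Import all_boot.
Set Implicit Arguments. Unset Strict Implicit. Unset Printing Implicit Defensive.

Section Graphs.
Variable T : finType.

Definition simple_graph (e : rel T) : Prop := symmetric e /\ irreflexive e.

Definition connected_graph (e : rel T) : Prop := forall x y : T, connect e x y.

Definition deg (e : rel T) (u : T) : nat := #|[set v | e u v]|.

(* edge set: each edge e_uv as the 2-element set {u, v}, counted once *)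
Definition edges (e : rel T) : {set {set T}} :=
  [set [set x; y] | x in T, y in T & e x y].

Definition has_cycle (e : rel T) : Prop :=
  exists (x : T) (p : seq T),
    [/\ 2 <= size p, path e x p, uniq (x :: p) & e (last x p) x].

Definition is_tree (e : rel T) : Prop := connected_graph e /\ ~ has_cycle e.

Definition is_cycle_graph (e : rel T) : Prop :=
  exists (n : nat) (f : 'I_n -> T),
    [/\ 3 <= n, bijective f &
        forall i j : 'I_n,
          e (f i) (f j) = ((j == i.+1 %% n :> nat) || (i == j.+1 %% n :> nat))].

End Graphs.

(* Main.v *)
Require Import Defs.
From mathcomp Require Import all_boot zify.
Set Implicit Arguments. Unset Strict Implicit. Unset Printing Implicit Defensive.

Lemma in_edges (T : finType) (e : rel T) E :
  reflect (exists x y, e x y /\ E = [set x; y]) (E \in edges e).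
Proof.
apply: (iffP imset2P).
- by case=> x y _; rewrite inE => exy ->; exists x, y.
- by case=> x [y [exy ->]]; apply: (Imset2spec (x1:=x) (x2:=y)) => //; rewrite inE.
Qed.

Lemma card_inc (T : finType) (e : rel T) v :
  simple_graph e -> #|[set E in edges e | v \in E]| = deg e v.
Proof.
case=> sym irr.
have -> : [set E in edges e | v \in E] = [set [set v; w] | w in [set w | e v w]].
  apply/setP=> E; rewrite inE; apply/andP/imsetP.
  - case=> /in_edges [x [y [exy ->]]] /set2P [->|->].
    + by exists y; rewrite ?inE.
    + by exists x; rewrite ?inE 1?sym // setUC.
  - case=> w; rewrite inE => evw ->; split; last by rewrite !inE eqxx.
    by apply/in_edges; exists v, w.
rewrite card_in_imset // => w1 w2; rewrite !inE => e1 e2 eq.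
have : w2 \in [set v; w1] by rewrite eq !inE eqxx orbT.
case/set2P=> // h; by rewrite h irr in e2.
Qed.

Lemma sum_edges (T : finType) (e : rel T) (F : T -> nat) :
  simple_graph e ->
  \sum_(E in edges e) (\sum_(v in E) F v) = \sum_v F v * deg e v.
Proof.
move=> sg.
transitivity (\sum_(E in edges e) \sum_v (v \in E) * F v).
  by apply: eq_bigr => E _; rewrite big_mkcond /=; apply: eq_bigr => v _; case: (v \in E); rewrite ?mul1n ?mul0n.
rewrite exchange_big /=; apply: eq_bigr => v _.
rewrite -(card_inc v sg) -sum1_card big_distrr /=.
rewrite [in RHS]big_mkcond /= [in LHS]big_mkcond /=; apply: eq_bigr => E _.
rewrite !inE; case: (E \in edges e); case: (v \in E); by rewrite /= ?muln0 ?muln1 ?mul1n ?mul0n.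
Qed.

Lemma handshake (T : finType) (e : rel T) :
  simple_graph e -> 2 * #|edges e| = \sum_v deg e v.
Proof.
move=> sg; have := sum_edges (fun _ => 1) sg.
rewrite (eq_bigr (fun _ => 2)); last first.
  move=> E /in_edges [x [y [exy ->]]]; rewrite sum1_card cards2.
  by case: sg => _ irr; case: eqP => // h; rewrite h irr in exy.
by rewrite sum_nat_const mulnC => ->; apply: eq_bigr => v _; rewrite mul1n.
Qed.
Lemma conn_edges (T : finType) (e : rel T) :
  connected_graph e -> #|T| <= #|edges e| + 1.
Proof.
move=> conn.
case: (pickP (@predT T)) => [r _|T0]; last first.
  by rewrite (eq_card0 T0).
pose P w k := [exists t : k.-tuple T, path e r t && (last r t == w)].
have exP : forall w, exists k, P w k.
  move=> w; case/connectP: (conn r w) => p pp ->; exists (size p).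
  by apply/existsP; exists (in_tuple p); rewrite /= pp eqxx.
pose dist w := ex_minn (exP w).
have distP : forall w k, P w k -> dist w <= k.
  by move=> w k; rewrite /dist; case: ex_minnP => m _ H; apply: H.
have distW : forall w, P w (dist w).
  by move=> w; rewrite /dist; case: ex_minnP.
have par : forall w, w != r -> exists u, e u w && (dist u < dist w).
  move=> w wr; case/existsP: (distW w) => t /andP [pt /eqP lt].
  move: (tval t) (size_tuple t) pt lt => s.
  case/lastP: s => [|s' y] sz pt lt.
    by rewrite -lt eqxx in wr.
  rewrite last_rcons in lt; rewrite rcons_path in pt; case/andP: pt => pt ey.
  exists (last r s'); rewrite -sz size_rcons ltnS -lt ey /=.
  by apply: distP; apply/existsP; exists (in_tuple s'); rewrite /= pt eqxx.
pose pw w := if [pick u | e u w && (dist u < dist w)] is Some u then [set u; w] else set0.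
have pwP : forall w, w != r -> exists u, [/\ e u w, dist u < dist w & pw w = [set u; w]].
  move=> w wr; rewrite /pw; case: pickP => [u /andP [eu du]|none].
    by exists u.
  by case: (par w wr) => u; rewrite none.
have inj : {in [set~ r] &, injective pw}.
  move=> w1 w2; rewrite !inE => w1r w2r eq.
  apply/eqP; apply/negPn/negP => ne.
  case: (pwP _ w1r) => u1 [_ d1 p1]; case: (pwP _ w2r) => u2 [_ d2 p2].
  have : w1 \in pw w2 by rewrite -eq p1 !inE eqxx orbT.
  rewrite p2 !inE (negbTE ne) orbF => /eqP h1.
  have : w2 \in pw w1 by rewrite eq p2 !inE eqxx orbT.
  rewrite p1 !inE (eq_sym w2 w1) (negbTE ne) orbF => /eqP h2.
  by move: d1 d2; rewrite -h1 -h2; lia.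
have sub : [set pw w | w in [set~ r]] \subset edges e.
  apply/subsetP => E /imsetP [w]; rewrite !inE => wr ->.
  by case: (pwP _ wr) => u [eu _ ->]; apply/in_edges; exists u, w.
have := subset_leq_card sub; rewrite (card_in_imset inj) cardsC1.
have h1 : 0 < #|T| by apply/card_gt0P; exists r.
by move=> h2; rewrite -(prednK h1) addn1.
Qed.

Lemma cyc_edges (T : finType) (e : rel T) :
  simple_graph e -> connected_graph e -> has_cycle e -> #|T| <= #|edges e|.
Proof.
case=> sym irr conn [x [p [sz pp up ea]]].
case/lastP: p sz pp up ea => [|q a] // sz pp up ea.
rewrite last_rcons in ea; rewrite size_rcons in sz.
rewrite rcons_path in pp; case/andP: pp => pq eqa.
rewrite -rcons_cons rcons_uniq in up; case/andP: up => anq uq.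
have xnq : x \notin q by case/andP: uq.
pose E0 := [set x; a].
pose e' : rel T := fun u v => e u v && ([set u; v] != E0).
have sym' : symmetric e' by move=> u v; rewrite /e' sym setUC.
have ce'xa : connect e' x a.
  apply/connectP; exists (rcons q a); last by rewrite last_rcons.
  rewrite rcons_path; apply/andP; split.
  - apply: (sub_in_path (P := predC1 a) _ _ pq).
      move=> u v; rewrite !inE => ua va euv; rewrite /e' euv /=.
      apply/eqP => h; have : a \in [set u; v] by rewrite h !inE eqxx orbT.
      case/set2P => h'; [by rewrite h' eqxx in ua | by rewrite h' eqxx in va].
    apply/allP => u uq' /=; apply: (contraNneq _ anq) => <-; exact uq'.
  - rewrite /e' eqa /=; apply/eqP => h.
    have : last x q \in E0 by rewrite -h !inE eqxx.
    case/set2P => h'.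
      have lastq : forall (s : seq T) z, 0 < size s -> last z s \in s.
        by move=> [|y s'] z //= _; exact: mem_last.
      by move: (lastq q x sz); rewrite h' (negbTE xnq).
    by move: (mem_last x q); rewrite h' (negbTE anq).
have cax : connect e' a x by rewrite (sym_connect_sym sym').
have conn' : connected_graph e'.
  suff sub : subrel e (connect e') by move=> u v; exact: connect_sub sub _ _ (conn u v).
  move=> u v euv.
  case: (boolP ([set u; v] == E0)) => h; last by apply: connect1; rewrite /e' euv h.
  have ux : u \in E0 by rewrite -(eqP h) !inE eqxx.
  have vx : v \in E0 by rewrite -(eqP h) !inE eqxx orbT.
  case/set2P: ux => hu; case/set2P: vx => hv; subst u v;
    first [by rewrite irr in euv | exact ce'xa | exact cax].
have edges' : edges e' = edges e :\ E0.
  apply/setP => E; rewrite in_setD1; apply/in_edges/andP.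
  - case=> u [v [/andP [euv ne] ->]]; split => //; apply/in_edges; by exists u, v.
  - case=> ne /in_edges [u [v [euv hE]]]; exists u, v; split=> //.
    by rewrite /e' euv -hE ne.
have E0in : E0 \in edges e by apply/in_edges; exists a, x; split => //; rewrite /E0 setUC.
have := conn_edges conn'; rewrite edges' => h.
by rewrite (cardsD1 E0) E0in /= addnC.
Qed.
Lemma nbr2 (T : finType) (e : rel T) u a b y :
  deg e u = 2 -> e u a -> e u b -> a != b -> e u y -> (y == a) || (y == b).
Proof.
move=> du ea eb ab ey.
have sub : [set a; b] \subset [set v | e u v].
  by apply/subsetP => v /set2P [->|->]; rewrite inE.
have : [set a; b] == [set v | e u v].
  by rewrite eqEcard sub cards2 ab -/(deg e u) du.
move/eqP => h; have : y \in [set v | e u v] by rewrite inE.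
by rewrite -h !inE.
Qed.

Lemma maxpath (T : finType) (e : rel T) k x s :
  #|T| - size s <= k -> path e x s -> uniq (x :: s) ->
  exists s', [/\ path e x s', uniq (x :: s') & forall y, e (last x s') y -> y \in x :: s'].
Proof.
elim: k s => [|k IH] s hk ps us;
  (case: (boolP [exists y, e (last x s) y && (y \notin x :: s)]) =>
     [/existsP [y /andP [ey yn]] | none]; last first);
  try (exists s; split => // y ey; apply/negPn/negP => yn;
       by move/existsPn: none => /(_ y); rewrite ey yn).
all: have us' : uniq (x :: rcons s y) by rewrite -rcons_cons rcons_uniq yn us.
all: have : #|x :: rcons s y| <= #|T| := max_card _.
all: rewrite (card_uniqP us') /= size_rcons => hs.
  by rewrite leqn0 subn_eq0 in hk; have := leq_trans hs hk; lia.
apply: (IH (rcons s y)) => //.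
  by rewrite size_rcons; lia.
by rewrite rcons_path ps ey.
Qed.
Lemma modS i n : i < n -> i.+1 %% n = if i.+1 == n then 0 else i.+1.
Proof. by move=> lt; case: eqP => [->|h]; [rewrite modnn | rewrite modn_small; lia]. Qed.

Lemma reg2_cycle (T : finType) (e : rel T) (x0 : T) :
  simple_graph e -> connected_graph e -> (forall v, deg e v = 2) -> is_cycle_graph e.
Proof.
move=> [sym irr] conn deg2.
have [s [ps us mx]] := @maxpath T e #|T| x0 [::] (leq_subr _ _) (isT : path e x0 [::]) (isT : uniq [:: x0]).
pose c := x0 :: s; pose n := size c.
pose C i := nth x0 c i.
have cP : forall i, i.+1 < n -> e (C i) (C i.+1).
  by move=> i lt; apply: (pathP x0 ps).
have cinj : forall i j, i < n -> j < n -> (C i == C j) = (i == j).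
  by move=> i j hi hj; apply: nth_uniq.
have CL : C n.-1 = last x0 s.
  by rewrite /C /n /c; case: (s) => [|y s'] //; rewrite -(nth_last x0 (y :: s')).
have cmem : forall i, i < n -> C i \in c by move=> i hi; apply: mem_nth.
have eC : forall i j, e (C i) (C j) = e (C j) (C i) by move=> i j; apply: sym.
have nL : #|[set v | e (last x0 s) v]| == 2 by rewrite -/(deg e _) deg2.
case/cards2P: nL => y1 [y2 [y12 hN]].
have ey : forall y, y \in [set y1; y2] -> e (last x0 s) y /\ exists2 j, j < n & y = C j.
  move=> y yin; have ey : e (last x0 s) y by rewrite -hN inE in yin.
  split=> //; exists (index y c); first by rewrite index_mem mx.
  by rewrite /C nth_index // mx.
have claim : forall j, j < n -> e (C n.-1) (C j) -> (j == 0) || (j == n.-2).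
  move=> j hj; rewrite CL => eLj.
  have jL : j != n.-1.
    by apply/eqP => h; move: eLj; rewrite h CL irr.
  case: (boolP ((j == 0) || (j == n.-2))) => // /norP [j0 j2].
  have h1 : e (C j) (C j.-1) by rewrite eC -{2}(prednK (n:=j)) ?lt0n //; apply: cP; lia.
  have h2 : e (C j) (C j.+1) by apply: cP; lia.
  have h3 : e (C j) (C n.-1) by rewrite eC CL.
  have ne : C j.-1 != C j.+1 by rewrite cinj; lia.
  have := nbr2 (deg2 _) h1 h2 ne h3. rewrite !cinj; lia.
have [j1 hj1 hy1] : exists2 j, j < n & y1 = C j by case: (ey y1); rewrite ?inE ?eqxx.
have [j2 hj2 hy2] : exists2 j, j < n & y2 = C j by case: (ey y2); rewrite ?inE ?eqxx ?orbT.
have e1 : e (C n.-1) (C j1) by rewrite CL -hy1; case: (ey y1); rewrite ?inE ?eqxx.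
have e2 : e (C n.-1) (C j2) by rewrite CL -hy2; case: (ey y2); rewrite ?inE ?eqxx ?orbT.
have c1 := claim _ hj1 e1; have c2 := claim _ hj2 e2.
have j12 : j1 != j2 by rewrite -cinj // -hy1 -hy2.
have n3 : 3 <= n by lia.
have eL0 : e (C n.-1) (C 0).
  by case/orP: c1 => /eqP h; [rewrite -h | have -> : 0 = j2 by lia].
have n0 : 0 < n by lia.
have F5 : forall i, i < n -> e (C i) (C (i.+1 %% n)).
  move=> i hi; rewrite modS //; case: eqP => h.
    by have -> : i = n.-1 by lia.
  by apply: cP; lia.
pose pr i := if i == 0 then n.-1 else i.-1.
have prlt : forall i, i < n -> pr i < n by move=> i hi; rewrite /pr; case: eqP; lia.
have prS : forall i, i < n -> (pr i).+1 %% n = i.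
  move=> i hi; rewrite modS ?prlt // /pr; case: (i =P 0) => h; case: eqP; lia.
have nb : forall i z, i < n -> e (C i) z -> (z == C (i.+1 %% n)) || (z == C (pr i)).
  move=> i z hi ez.
  have ea : e (C i) (C (i.+1 %% n)) := F5 i hi.
  have eb : e (C i) (C (pr i)) by have := F5 (pr i) (prlt i hi); rewrite prS // eC.
  have ne : C (i.+1 %% n) != C (pr i).
    rewrite cinj ?ltn_pmod ?prlt //; try lia.
    rewrite modS // /pr; case: (i =P 0) => h; case: (i.+1 =P n) => h'; apply/eqP; lia.
  exact: nbr2 (deg2 _) ea eb ne ez.
have F6 : forall i j, i < n -> j < n -> e (C i) (C j) = (j == i.+1 %% n) || (i == j.+1 %% n).
  move=> i j hi hj; apply/idP/idP.
  - move=> eij; case/orP: (nb i _ hi eij); rewrite cinj ?ltn_pmod ?prlt //.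
      by move/eqP=> h; rewrite h eqxx.
    by move/eqP=> h; rewrite h prS // eqxx orbT.
  - case/orP => /eqP h; first by rewrite h; apply: F5.
    by rewrite eC h; apply: F5.
have clos : forall x z, x \in c -> e x z -> z \in c.
  move=> x z xc exz.
  have hx : x = C (index x c) by rewrite /C nth_index.
  have hi : index x c < n by rewrite index_mem.
  rewrite hx in exz; case/orP: (nb _ _ hi exz) => /eqP ->; apply: cmem.
    by apply: ltn_pmod; lia.
  exact: prlt.
have allc : forall y, y \in c.
  have gen : forall p x, path e x p -> x \in c -> last x p \in c.
    by elim=> [|z p IH] x //= /andP [exz pp] xc; exact: IH _ pp (clos _ _ xc exz).
  move=> y; case/connectP: (conn x0 y) => p pp ->; apply: gen pp _.
  by rewrite inE eqxx.
have hidx : forall y, index y c < n by move=> y; rewrite index_mem allc.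
exists n, (fun i : 'I_n => C i); split => //.
  exists (fun y => Ordinal (hidx y)).
    by move=> i; apply: val_inj => /=; exact: (index_uniq x0 (ltn_ord i) us).
  by move=> y; rewrite /C /= nth_index // allc.
by move=> i j; rewrite F6.
Qed.

Unset Implicit Arguments.

Theorem lemma1 (T : finType) (e : rel T) :
  simple_graph e -> connected_graph e ->
  1 <= #|edges e| ->
  \sum_(E in edges e) (\sum_(v in E) deg e v) = 4 * #|edges e| ->
  is_cycle_graph e \/
  (is_tree e /\
   (exists v : T, deg e v = 3 /\ forall w : T, w != v -> deg e w < 3) /\
   4 <= #|T|).
Proof.
move=> sg conn m1 hsum.
have [sym irr] := sg.
rewrite (sum_edges (deg e) sg) in hsum.
have hs := handshake sg.
have cn := conn_edges conn.
have [x [y [exy _]]] : exists x y, e x y /\ True.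
  by case/card_gt0P: m1 => E /in_edges [x [y [exy _]]]; exists x, y.
have pos : forall v, 0 < deg e v.
  move=> v; rewrite lt0n; apply/negP => /eqP d0.
  have key : forall w, connect e v w -> w = v.
    move=> w /connectP [[|z p] /=]; first by move=> _ ->.
    case/andP => evz _ _; move: d0; rewrite /deg => /eqP; rewrite cards_eq0 => /eqP h.
    have : z \in [set u | e v u] by rewrite inE.
    by rewrite h inE.
  have hx := key x (conn v x); have hy := key y (conn v y).
  by move: exy; rewrite hx hy irr.
pose q v := (deg e v - 1) * (deg e v - 2).
have hq : \sum_v (deg e v * deg e v + 2) = \sum_v (q v + 3 * deg e v).
  by apply: eq_bigr => v _; rewrite /q; have := pos v; nia.
have h3 : forall k, \sum_v k * deg e v = k * \sum_v deg e v by move=> k; rewrite big_distrr.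
rewrite big_split in hq; rewrite big_split h3 sum_nat_const in hq.
have hm : \sum_v deg e v * deg e v = \sum_v deg e v * deg e v := erefl.
set Q := \sum_v q v in hq.
set S2 := \sum_v deg e v * deg e v in hsum hq.
set S1 := \sum_v deg e v in hs hq.
have hq2 : S2 + 2 * #|T| = Q + 3 * S1 by rewrite mulnC; exact: hq.
have hQ : Q + 2 * #|edges e| = 2 * #|T| by lia.
have hQ2 : Q <= 2 by lia.
case: (boolP (Q == 0)) => Q0.
- left.
  have q0 : forall v, q v = 0.
    by move: Q0; rewrite /Q sum_nat_eq0 => /forallP h v; apply/eqP; exact: h v.
  pose r v := 2 * deg e v - deg e v * deg e v.
  have hr : \sum_v (deg e v * deg e v + r v) = \sum_v 2 * deg e v.
    apply: eq_bigr => v _; rewrite /r; have := pos v; have := q0 v; rewrite /q; nia.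
  rewrite big_split /= h3 -/S2 -/S1 in hr.
  have r0 : \sum_v r v == 0 by apply/eqP; lia.
  move: r0; rewrite sum_nat_eq0 => /forallP hr0.
  apply: (reg2_cycle x sg conn) => v.
  have := hr0 v; have := q0 v; have := pos v; rewrite /r /q => ? ? /eqP ?; nia.
- right.
  case: (pickP (fun v => 0 < q v)) => [v qv | none]; last first.
    move: Q0; rewrite /Q; have -> : \sum_v q v = 0.
      by apply: big1 => v _; have := none v; rewrite /=; case: (q v).
    by [].
  pose R := \sum_(w | predT w && (w != v)) q w.
  have QD' : Q = q v + R by rewrite /Q /R (bigD1 v).
  have qv2 : q v <= 2 by lia.
  have dv : deg e v = 3 by move: qv qv2; rewrite /= /q; have := pos v; nia.
  have rest : R == 0 by apply/eqP; move: qv2 QD'; rewrite /q dv; lia.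
  move: rest; rewrite /R sum_nat_eq0 => /forallP hrest.
  have nm : #|T| = #|edges e| + 1 by move: QD'; rewrite /q dv; lia.
  split; [split=> // hc | split].
  + by have := cyc_edges sg conn hc; lia.
  + exists v; split=> // w wv; have := hrest w; rewrite /= wv /= /q => /eqP.
    by have := pos w; nia.
  + have : #|v |: [set w | e v w]| = 4 by rewrite cardsU1 inE irr -/(deg e v) dv.
    by move=> <-; apply: max_card.
Qed.
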